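(* Suppose $f$ satisfies the separation property. Then for every $n\geqslant 1$: (1) if $A,B\in\mathcal{A}_n$ and $A\cap B\neq\emptyset$, then $A=B$; (2) if $A_{i_1\dots i_n},A_{j_1\dots j_n}\in\mathcal{A}_n$ and $A_{i_1\dots i_n}=A_{j_1\dots j_n}$, then $(i_1,\dots,i_n)=(j_1,\dots,j_n)$.
   Context: Let $(X,d)$ be a compact metric space, $X_1,\dots,X_N$ ($N\geqslant 2$) non-empty pairwise disjoint open subsets with $X=\bigcup_i\overline{X_i}$, and $f:X\to X$ a map such that each restriction $f|_{X_i}$ admits a continuous extension $f_i:\overline{X_i}\to X$. Separation property: each $f_i$ is injective and $f_i(\overline{X_i})\cap f_j(\overline{X_j})=\emptyset$ for $i\neq j$. For $A\subset X$ let $F_i(A):=\overline{f(A\cap X_i)}$; for $(i_1,\dots,i_n)\in\{1,\dots,N\}^n$, $A_{i_1\dots i_n}:=F_{i_n}\circ F_{i_{n-1}}\circ\dots\circ F_{i_1}(X)$ is called an atom of generation $n$ if it is non-empty, and $\mathcal{A}_n$ denotes the set of atoms of generation $n$. *)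

(* Defs.v *)
From HB Require Import structures.
From mathcomp Require Import all_boot all_order all_algebra.
From mathcomp Require Import all_classical all_reals all_analysis.
Set Implicit Arguments. Unset Strict Implicit. Unset Printing Implicit Defensive.
Import Order.TTheory GRing.Theory Num.Theory.
Local Open Scope classical_set_scope.

Definition Fop {R : realType} {X : pseudoMetricType R} {N : nat}
  (Xs : 'I_N -> set X) (f : X -> X) (i : 'I_N) (A : set X) : set X :=
  closure (f @` (A `&` Xs i)).

(* A_{i_1 ... i_n} := F_{i_n} o ... o F_{i_1} (X); the word s = [:: i_1; ...; i_n]
   is applied left to right. *)
Definition atom {R : realType} {X : pseudoMetricType R} {N : nat}
  (Xs : 'I_N -> set X) (f : X -> X) (s : seq 'I_N) : set X :=
  foldl (fun A i => Fop Xs f i A) [set: X] s.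

(* Main.v *)
Require Import Defs.
From HB Require Import structures.
From mathcomp Require Import all_boot all_order all_algebra.
From mathcomp Require Import all_classical all_reals all_analysis.
Local Open Scope classical_set_scope.

Lemma atom_rcons (R : realType) (X : pseudoMetricType R) (N : nat)
  (Xs : 'I_N -> set X) (f : X -> X) s i :
  atom Xs f (rcons s i) = Fop Xs f i (atom Xs f s).
Proof. by rewrite /atom foldl_rcons. Qed.

Lemma atom_closed (R : realType) (X : pseudoMetricType R) (N : nat)
  (Xs : 'I_N -> set X) (f : X -> X) s : closed (atom Xs f s).
Proof.
elim/last_ind: s => [|s i _]; first exact: closedT.
rewrite atom_rcons; exact: closed_closure.
Qed.

Lemma keyK (R : realType) (X : pseudoMetricType R) (N : nat)
  (Xs : 'I_N -> set X) (f : X -> X) (fi : 'I_N -> X -> X) :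
  hausdorff_space X ->
  compact [set: X] ->
  (forall i, {within closure (Xs i), continuous (fi i)}) ->
  (forall i x, Xs i x -> fi i x = f x) ->
  forall i A, closed A -> Fop Xs f i A `<=` fi i @` (A `&` closure (Xs i)).
Proof.
move=> hX cX cont ext i A cA.
set C := fi i @` (A `&` closure (Xs i)).
have cC : closed C.
  apply: compact_closed => //.
  apply: continuous_compact.
    exact: (continuous_subspaceW (@subIsetr _ _ _) (cont i)).
  apply: (subclosed_compact _ cX) => //.
  exact: closedI cA (@closed_closure _ _).
rewrite /Fop ((closure_id C).1 cC).
apply: closure_subset => y [x [Ax Xx] <-].
exists x; first by split => //; exact: subset_closure.
exact: ext.
Qed.

Theorem lemma1 (R : realType) (X : pseudoMetricType R) (N : nat)
  (Xs : 'I_N -> set X) (f : X -> X) (fi : 'I_N -> X -> X) :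
  (* (X,d) compact metric space *)
  hausdorff_space X ->
  compact [set: X] ->
  (2 <= N)%N ->
  (forall i, open (Xs i)) ->
  (forall i, Xs i !=set0) ->
  (forall i j, i != j -> Xs i `&` Xs j = set0) ->
  [set: X] = \bigcup_i closure (Xs i) ->
  (* f_i is a continuous extension of f restricted to X_i *)
  (forall i, {within closure (Xs i), continuous (fi i)}) ->
  (forall i x, Xs i x -> fi i x = f x) ->
  (* separation property *)
  (forall i, {in closure (Xs i) &, injective (fi i)}) ->
  (forall i j, i != j ->
     fi i @` closure (Xs i) `&` fi j @` closure (Xs j) = set0) ->
  forall n : nat, (1 <= n)%N ->
    (forall s t : n.-tuple 'I_N,
       atom Xs f s !=set0 -> atom Xs f t !=set0 ->
       atom Xs f s `&` atom Xs f t !=set0 -> atom Xs f s = atom Xs f t) /\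
    (forall s t : n.-tuple 'I_N,
       atom Xs f s !=set0 -> atom Xs f t !=set0 ->
       atom Xs f s = atom Xs f t -> s = t).
Proof.
move=> hX cX _ _ _ _ _ cont ext inj sep n _.
have K := @keyK _ _ _ Xs f fi hX cX cont ext.
have main : forall s t : seq 'I_N, size s = size t ->
    atom Xs f s `&` atom Xs f t !=set0 -> atom Xs f s = atom Xs f t /\ s = t.
  elim/last_ind => [|s i IH] t.
    by case: t.
  case/lastP: t => [|t j]; first by rewrite size_rcons.
  rewrite !size_rcons => -[hs] [x []].
  rewrite !atom_rcons => /(K _ _ (atom_closed _ _ _ _ _ _)) [a [As Ca] ea].
  move=> /(K _ _ (atom_closed _ _ _ _ _ _)) [b [Bt Cb] eb].
  have ij : i = j.
    apply/eqP; apply/negPn/negP => /sep E.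
    have : (fi i @` closure (Xs i) `&` fi j @` closure (Xs j)) x.
      by split; [exists a|exists b].
    by rewrite E.
  subst j.
  have ab : a = b by apply: (inj i); rewrite ?in_setE // ea eb.
  subst b.
  have [-> ->] := IH t hs (ex_intro _ a (conj As Bt)).
  by [].
split.
  move=> s t _ _ st; exact: (main s t (etrans (size_tuple s) (esym (size_tuple t))) st).1.
move=> s t [x sx] _ st; apply: val_inj.
apply: (main s t (etrans (size_tuple s) (esym (size_tuple t))) _).2.
by exists x; split => //; rewrite -st.
Qed.
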